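(* Let $A$ be a commutative Noetherian ring containing a commutative subring $\mathbb{K}$, and let $y_1,\ldots,y_n\in A$. Let $S=\mathbb{K}[x_1,\ldots,x_n]$, let $\varphi:S\to S$ be a flat $\mathbb{K}$-algebra endomorphism with $\varphi(x_i)=s_ix_i$ for nonzero $s_i\in S$, let $\psi:S\to A$ be the $\mathbb{K}$-algebra homomorphism with $\psi(x_i)=y_i$, and let $\Phi:A\to A$ be a $\mathbb{K}$-algebra homomorphism with $\Phi\circ\psi=\psi\circ\varphi$. Assume that $\Phi$ is flat and that $y_1,\ldots,y_n$ is an $A$-Koszul regular sequence. Then the $\varphi$-Koszul complex $\mathcal{FK}_\bullet(y_1,\ldots,y_n;A)$ is a finite free resolution of $A/I_n$ in the category of left $A[\Theta;\Phi]$-modules, where $I_n=\langle y_1,\ldots,y_n\rangle$.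
   Context: For a commutative ring $B$ and ring endomorphism $\phi$ of $B$, the left skew polynomial ring $B[\Theta;\phi]$ is the ring which is a free left $B$-module with basis $\{\Theta^i\}_{i\geq0}$ and multiplication determined by $\Theta b=\phi(b)\Theta$ for $b\in B$. A sequence $f_1,\dots,f_n$ in a commutative ring $R$ is a Koszul regular sequence if the Koszul complex $K_\bullet(f_1,\ldots,f_n;R)$ is a free resolution of $R/\langle f_1,\dots,f_n\rangle$ (i.e. has homology only in degree $0$). Write $t_i=\psi(s_i)$, so $\Phi(y_i)=t_iy_i$; for $J=\{j_1<\cdots<j_k\}\subseteq\{1,\dots,n\}$ put $t_J=t_{j_1}\cdots t_{j_k}$ ($t_\emptyset=1$) and $\mathbf{e}_J=\mathbf{e}_{j_1}\wedge\cdots\wedge\mathbf{e}_{j_k}$. The complex $\mathcal{FK}_\bullet(y_1,\ldots,y_n;A)$ ($=A\otimes_S\mathcal{FK}_\bullet(x_1,\dots,x_n)$) is: for $0\le l\le n+1$, $\mathcal{FK}_l$ is the free left $A[\Theta;\Phi]$-module with basis $\{\mathbf{e}_I:|I|=l\}\cup\{\mathbf{e}_J\wedge u:|J|=l-1\}$, and $\partial_l:\mathcal{FK}_l\to\mathcal{FK}_{l-1}$ is the left $A[\Theta;\Phi]$-linear map with $\partial_l(\mathbf{e}_I)=\sum_{r=1}^l(-1)^{r-1}y_{i_r}\mathbf{e}_{I\setminus\{i_r\}}$ for $I=\{i_1<\dots<i_l\}$ and $\partial_l(\mathbf{e}_J\wedge u)=(-1)^{l-1}(\Theta-t_J)\mathbf{e}_J+\sum_{r=1}^{l-1}(-1)^{r-1}\Phi(y_{j_r})\mathbf{e}_{J\setminus\{j_r\}}\wedge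 u$ for $J=\{j_1<\dots<j_{l-1}\}$. $A/I_n$ is a left $A[\Theta;\Phi]$-module with $\Theta$ acting by the map induced by $\Phi$ (well defined since $\Phi(I_n)\subseteq I_n$). *)

(* Defs.v *)
From HB Require Import structures.
From mathcomp Require Import all_boot all_order all_algebra.
Set Implicit Arguments. Unset Strict Implicit. Unset Printing Implicit Defensive.
Import Order.TTheory GRing.Theory Num.Theory.
Local Open Scope ring_scope.

Fixpoint mpoly (R : comNzRingType) (n : nat) : comNzRingType :=
  if n is m.+1 then ({poly mpoly R m} : comNzRingType) else R.

Fixpoint mconst (R : comNzRingType) (n : nat) : R -> mpoly R n :=
  match n return R -> mpoly R n with
  | 0 => fun r => r
  | m.+1 => fun r => (@mconst R m r)%:P
  end.

(* the variables x_i, i : 'I_n (x_{n} of R[x_1..x_{n}] is the outermost 'X) *)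
Fixpoint mvar (R : comNzRingType) (n : nat) : 'I_n -> mpoly R n :=
  match n return 'I_n -> mpoly R n with
  | 0 => fun _ => 0
  | m.+1 => fun i => match unlift ord_max i with
                     | Some j => (@mvar R m j)%:P
                     | None => 'X
                     end
  end.

(* ---------- Flatness of a ring homomorphism f : R -> T (T viewed as an R-module
   via f), stated through the equational criterion of flatness
   (Stacks Project, Tag 00HK). ---------- *)
Definition flat_hom (R T : comNzRingType) (f : R -> T) : Prop :=
  forall (m : nat) (r : 'I_m -> R) (t : 'I_m -> T),
    \sum_(i < m) f (r i) * t i = 0 ->
    exists (k : nat) (a : 'I_m -> 'I_k -> R) (u : 'I_k -> T),
      (forall i, t i = \sum_(j < k) f (a i j) * u j) /\
      (forall j, \sum_(i < m) r i * a i j = 0).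

Definition is_ideal (A : comNzRingType) (I : A -> Prop) : Prop :=
  I 0 /\ (forall x y, I x -> I y -> I (x + y)) /\ (forall a x, I x -> I (a * x)).

Definition noetherian (A : comNzRingType) : Prop :=
  forall I : A -> Prop, is_ideal I ->
    exists (m : nat) (g : 'I_m -> A),
      forall x, I x <-> exists c : 'I_m -> A, x = \sum_(i < m) c i * g i.

Definition in_ideal (A : comNzRingType) (n : nat) (y : 'I_n -> A) (a : A) : Prop :=
  exists c : 'I_n -> A, a = \sum_(i < n) c i * y i.

(* ---------- Koszul complex K(y_1..y_n; A) ----------
   A chain is a function on subsets I of {1..n} (coefficient of e_I). *)
(* sign (-1)^(r-1) where i is the r-th element of I *)
Definition ksign (A : comNzRingType) (n : nat) (i : 'I_n) (I : {set 'I_n}) : A :=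
  (-1) ^+ #|[set j in I | (nat_of_ord j < nat_of_ord i)%N]|.

(* d(e_I) = sum_r (-1)^(r-1) y_{i_r} e_{I \ i_r}, extended A-linearly *)
Definition koszul_d (A : comNzRingType) (n : nat) (y : 'I_n -> A)
  (c : {ffun {set 'I_n} -> A}) : {ffun {set 'I_n} -> A} :=
  [ffun K : {set 'I_n} => \sum_(i : 'I_n | i \notin K) ksign A i (i |: K) * y i * c (i |: K)].

Definition supported (T : zmodType) (n : nat) (l : nat) (c : {ffun {set 'I_n} -> T}) : Prop :=
  forall I : {set 'I_n}, #|I| != l -> c I = 0.

Definition koszul_regular (A : comNzRingType) (n : nat) (y : 'I_n -> A) : Prop :=
  forall l, (0 < l)%N -> forall c : {ffun {set 'I_n} -> A},
    supported l c -> koszul_d y c = 0 ->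
    exists b, supported l.+1 b /\ koszul_d y b = c.

(* ---------- Skew polynomial ring A[Theta; Phi] ----------
   Elements are represented by their coefficient polynomials sum_i a_i Theta^i
   (a_i on the left); the multiplication is the skew one:
   (a Theta^i)(b Theta^j) = a Phi^i(b) Theta^(i+j). *)
Definition skmul (A : comNzRingType) (Phi : A -> A) (p q : {poly A}) : {poly A} :=
  \sum_(i < size p) (p`_i *: ('X^i * map_poly (iter i Phi) q)).

Definition tprod (A : comNzRingType) (n : nat) (t : 'I_n -> A) (J : {set 'I_n}) : A :=
  \prod_(j in J) t j.

(* An element of the total module of FK: x.1 I = coefficient of e_I,
   x.2 J = coefficient of e_J /\ u. *)
Definition fkT (A : comNzRingType) (n : nat) : Type :=
  ({ffun {set 'I_n} -> {poly A}} * {ffun {set 'I_n} -> {poly A}})%type.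

(* degree-l part: e_I with |I| = l, e_J /\ u with |J| = l - 1 *)
Definition inFK (A : comNzRingType) (n : nat) (l : nat) (x : fkT A n) : Prop :=
  supported l x.1 /\ (forall J : {set 'I_n}, #|J|.+1 != l -> x.2 J = 0).

(* The differential of FK, the left A[Theta;Phi]-linear map with
   d(e_I)      = sum_r (-1)^(r-1) y_{i_r} e_{I\i_r}
   d(e_J /\ u) = (-1)^(|J|) (Theta - t_J) e_J + sum_r (-1)^(r-1) Phi(y_{j_r}) e_{J\j_r} /\ u,
   applied to x = sum_I x.1 I e_I + sum_J x.2 J e_J /\ u. *)
Definition fk_d (A : comNzRingType) (n : nat) (Phi : A -> A) (y t : 'I_n -> A)
  (x : fkT A n) : fkT A n :=
  ([ffun K : {set 'I_n} => \sum_(i : 'I_n | i \notin K)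
                 skmul Phi (x.1 (i |: K)) ((ksign A i (i |: K) * y i)%:P)
              + skmul Phi (x.2 K) ((-1) ^+ #|K| *: ('X - (tprod t K)%:P))],
   [ffun K : {set 'I_n} => \sum_(j : 'I_n | j \notin K)
                 skmul Phi (x.2 (j |: K)) ((ksign A j (j |: K) * Phi (y j))%:P)]).

Definition fk0 (A : comNzRingType) (n : nat) : fkT A n := (0, 0).

(* augmentation FK_0 = A[Theta;Phi] e_emptyset -> A/I_n, p e_0 |-> p . (1 mod I_n),
   where Theta acts on A/I_n through Phi; returns a representative in A. *)
Definition aug (A : comNzRingType) (Phi : A -> A) (p : {poly A}) : A :=
  \sum_(i < size p) p`_i * iter i Phi 1.

(* Main.v *)
Require Import Defs.
From HB Require Import structures.
From mathcomp Require Import all_boot all_order all_algebra zify ring.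
From Stdlib Require Import IndefiniteDescription.
Set Implicit Arguments. Unset Strict Implicit. Unset Printing Implicit Defensive.
Import Order.TTheory GRing.Theory Num.Theory.
Local Open Scope ring_scope.
Lemma iter0r (A : comNzRingType) (Phi : {rmorphism A -> A}) i : iter i Phi 0 = 0.
Proof. by elim: i => //= i ->; rewrite rmorph0. Qed.
Lemma iter1r (A : comNzRingType) (Phi : {rmorphism A -> A}) i : iter i Phi 1 = 1.
Proof. by elim: i => //= i ->; rewrite rmorph1. Qed.
Lemma iterDr (A : comNzRingType) (Phi : {rmorphism A -> A}) i a b :
  iter i Phi (a + b) = iter i Phi a + iter i Phi b.
Proof. by elim: i => //= i ->; rewrite rmorphD. Qed.
Lemma iterMr (A : comNzRingType) (Phi : {rmorphism A -> A}) i a b :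
  iter i Phi (a * b) = iter i Phi a * iter i Phi b.
Proof. by elim: i => //= i ->; rewrite rmorphM. Qed.
Lemma iterNr (A : comNzRingType) (Phi : {rmorphism A -> A}) i a :
  iter i Phi (- a) = - iter i Phi a.
Proof. by elim: i => //= i ->; rewrite rmorphN. Qed.
Lemma iterBr (A : comNzRingType) (Phi : {rmorphism A -> A}) i a b :
  iter i Phi (a - b) = iter i Phi a - iter i Phi b.
Proof. by rewrite iterDr iterNr. Qed.
Lemma iter_sign (A : comNzRingType) (Phi : {rmorphism A -> A}) i m :
  iter i Phi ((-1) ^+ m) = (-1) ^+ m.
Proof. by elim: i => //= i ->; rewrite rmorphXn rmorphN1. Qed.
Lemma iter_sum (A : comNzRingType) (Phi : {rmorphism A -> A}) i (I : finType) (P : pred I) F :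
  iter i Phi (\sum_(j | P j) F j) = \sum_(j | P j) iter i Phi (F j).
Proof.
elim/big_rec2: _ => [|j a b _ <-]; first exact: iter0r.
by rewrite iterDr.
Qed.

Lemma sum_ext (A : comNzRingType) (G : nat -> A) m N : (m <= N)%N ->
  (forall i, (m <= i < N)%N -> G i = 0) -> \sum_(i < N) G i = \sum_(i < m) G i.
Proof.
move=> mN H; rewrite -!(big_mkord xpredT) (@big_cat_nat _ _ _ m 0 N _ _ (leq0n m) mN) /=.
rewrite [X in _ + X = _](_ : _ = 0) ?addr0 //.
by rewrite big_nat_cond big1 // => i /andP[/H ->].
Qed.

Lemma coef_skmul (A : comNzRingType) (Phi : {rmorphism A -> A}) p q k :
  (skmul Phi p q)`_k = \sum_(i < k.+1) p`_i * iter i Phi (q`_(k - i)).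
Proof.
rewrite /skmul coef_sum.
transitivity (\sum_(i < size p) (if (k < i)%N then 0 else p`_i * iter i Phi (q`_(k - i)))).
  apply: eq_bigr => i _; rewrite coefZ coefXnM coef_map_id0 ?iter0r //.
  by case: ifP => _; rewrite ?mulr0.
set G := fun i : nat => if (k < i)%N then 0 else p`_i * iter i Phi (q`_(k - i)).
transitivity (\sum_(i < size p + k.+1) G i).
  symmetry; apply: sum_ext; first exact: leq_addr.
  by move=> i /andP[] + _ => /(nth_default 0) Hp; rewrite /G Hp mul0r if_same.
rewrite (@sum_ext _ G k.+1) ?leq_addr //; last first.
  by move=> i /andP[] + _; rewrite /G => ->.
  by rewrite addnS ltnS leq_addl.
apply: eq_bigr => i _; rewrite /G ltnNge.
by have := ltn_ord i; rewrite ltnS => ->.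
Qed.

Lemma skmulC (A : comNzRingType) (Phi : {rmorphism A -> A}) p c k :
  (skmul Phi p (c%:P))`_k = p`_k * iter k Phi c.
Proof.
rewrite coef_skmul big_ord_recr /= subnn coefC eqxx big1 ?add0r // => i _.
by rewrite coefC subn_eq0 leqNgt ltn_ord /= iter0r mulr0.
Qed.

Lemma skmulXC (A : comNzRingType) (Phi : {rmorphism A -> A}) p s c k :
  (skmul Phi p (s *: ('X - c%:P)))`_k =
  (if k is k'.+1 then p`_k' * iter k' Phi s else 0) - p`_k * iter k Phi (s * c).
Proof.
rewrite coef_skmul big_ord_recr /= subnn coefZ coefB coefX coefC /= sub0r.
case: k => [|k].
  by rewrite big_ord0 /= add0r sub0r mulrN mulrN.
rewrite (big_ord_recr k) /= subSnn coefZ coefB coefX coefC /= subr0 mulr1.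
rewrite big1 ?add0r; last first.
  move=> i _; rewrite coefZ coefB coefX coefC.
  have ik := ltn_ord i.
  have -> : (k.+1 - i == 1)%N = false by apply/negbTE; lia.
  have -> : (k.+1 - i == 0)%N = false by apply/negbTE; lia.
  by rewrite subr0 mulr0 iter0r mulr0.
by rewrite mulrN iterNr rmorphN mulrN.
Qed.

Definition cv (A : comNzRingType) n (x : {ffun {set 'I_n} -> {poly A}}) k : {ffun {set 'I_n} -> A} :=
  [ffun I => (x I)`_k].

Definition wk (A : comNzRingType) (Phi : {rmorphism A -> A}) n (y : 'I_n -> A) k : 'I_n -> A :=
  fun i => iter k Phi (y i).

Definition Gk (A : comNzRingType) (Phi : {rmorphism A -> A}) n (t : 'I_n -> A)
  (b : {ffun {set 'I_n} -> {poly A}}) (k : nat) : {ffun {set 'I_n} -> A} :=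
  [ffun K : {set 'I_n} => (-1) ^+ #|K| * ((if k is k'.+1 then (b K)`_k' else 0) - (b K)`_k * iter k Phi (tprod t K))].

Lemma fk_d1 (A : comNzRingType) (Phi : {rmorphism A -> A}) n (y t : 'I_n -> A) x k :
  cv (fk_d Phi y t x).1 k = koszul_d (wk Phi y k) (cv x.1 k) + Gk Phi t x.2 k.
Proof.
apply/ffunP => K; rewrite !ffunE coefD coef_sum skmulXC /=.
congr (_ + _).
  apply: eq_bigr => i _; by rewrite skmulC ffunE iterMr iter_sign mulrC.
case: k => [|k] /=; first by ring.
by rewrite -!iterS iter_sign iterMr iter_sign; ring.
Qed.

Lemma fk_d2 (A : comNzRingType) (Phi : {rmorphism A -> A}) n (y t : 'I_n -> A) x k :
  cv (fk_d Phi y t x).2 k = koszul_d (wk Phi y k.+1) (cv x.2 k).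
Proof.
apply/ffunP => K; rewrite !ffunE coef_sum.
apply: eq_bigr => i _; rewrite skmulC ffunE iterMr iter_sign mulrC /wk -iterSr //.
Qed.

Lemma ksign_U1 (A : comNzRingType) n (i : 'I_n) (K : {set 'I_n}) : i \notin K ->
  ksign A i (i |: K) = (-1) ^+ #|[set m in K | (m < i)%N]|.
Proof.
move=> iK; rewrite /ksign.
have -> : [set m in i |: K | (m < i)%N] = [set m in K | (m < i)%N] => //.
apply/setP => m; rewrite !inE; case: eqP => [->|] //=; by rewrite ltnn !andbF.
Qed.

Lemma ksign_U2 (A : comNzRingType) n (i j : 'I_n) (K : {set 'I_n}) : i \notin K -> j \notin K -> i != j ->
  ksign A j (j |: (i |: K)) = (-1) ^+ (i < j)%N * (-1) ^+ #|[set m in K | (m < j)%N]|.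
Proof.
move=> iK jK ij; rewrite ksign_U1; last by rewrite in_setU1 negb_or eq_sym ij.
rewrite -exprD.
have -> : [set m in i |: K | (m < j)%N] =
   (if (i < j)%N then i |: [set m in K | (m < j)%N] else [set m in K | (m < j)%N]).
  apply/setP => m; case: (ltnP i j) => lij; rewrite !inE;
  case: (eqVneq m i) => [->|mi] /=; rewrite ?lij ?(negbTE iK) //.
  by rewrite ltnNge lij andbF.
case: ltnP => //= _; rewrite cardsU1 inE (negbTE iK) //.
Qed.

Lemma sum_antisym (A : comNzRingType) n (F : 'I_n -> 'I_n -> A) :
  (forall i j, F i j = - F j i) -> (forall i, F i i = 0) ->
  \sum_i \sum_j F i j = 0.
Proof.
move=> Fa F0.
have E : forall i j, F i j = (if (i < j)%N then F i j else 0) + (if (j < i)%N then F i j else 0).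
  move=> i j; case: (ltngtP i j) => [ij|ji|/val_inj ->]; rewrite ?F0 ?addr0 ?add0r //.
under eq_bigr => i _ do under eq_bigr => j _ do rewrite E.
under eq_bigr => i _ do rewrite big_split /=.
rewrite big_split /= [X in _ + X]exchange_big /=.
rewrite -big_split /= big1 // => i _; rewrite -big_split big1 // => j _.
case: ifP => _ /=; last by rewrite addr0. by rewrite [F i j]Fa addNr.
Qed.

Lemma koszul_dd (A : comNzRingType) n (w : 'I_n -> A) c : koszul_d w (koszul_d w c) = 0.
Proof.
apply/ffunP => K; rewrite !ffunE.
pose G := fun i j : 'I_n => if (i \notin K) && (j \notin K) && (i != j) then
   ksign A i (i |: K) * w i * (ksign A j (j |: (i |: K)) * w j * c (j |: (i |: K))) else 0.
transitivity (\sum_i \sum_j G i j).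
  rewrite big_mkcond; apply: eq_bigr => i _; rewrite /G.
  case: ifP => iK /=; last by rewrite big1.
  rewrite ffunE big_distrr big_mkcond; apply: eq_bigr => j _ /=.
  rewrite in_setU1 negb_or eq_sym.
  by case: (j \in K); case: (i != j).
apply: sum_antisym => [i j|i]; last by rewrite /G eqxx andbF.
rewrite /G; case: (boolP (i \notin K)) => iK; case: (boolP (j \notin K)) => jK;
  case: (eqVneq i j) => [eij|ij] /=; rewrite ?oppr0 //.
rewrite (ksign_U2 _ iK jK ij) (ksign_U2 _ jK iK) 1?eq_sym // !ksign_U1 // setUCA.
case: (ltngtP i j) => [lij|lji|/val_inj eij]; last by rewrite eij eqxx in ij.
  rewrite /= expr1 expr0; ring.
rewrite /= expr1 expr0; ring.
Qed.

Lemma flat_sys (R T : comNzRingType) (f : {rmorphism R -> T}) (I E : finType)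
  (M : E -> I -> R) (t : I -> T) : flat_hom f ->
  forall s : seq E, (forall e, e \in s -> \sum_i f (M e i) * t i = 0) ->
  exists k (a : I -> 'I_k -> R) (u : 'I_k -> T),
    (forall i, t i = \sum_j f (a i j) * u j) /\
    (forall e, e \in s -> forall j, \sum_i M e i * a i j = 0).
Proof.
move=> fl; elim=> [_|e s IH H].
  exists #|I|, (fun i j => (enum_rank i == j)%:R), (fun j => t (enum_val j)); split => // i.
  rewrite (bigD1 (enum_rank i)) //= eqxx rmorph1 mul1r enum_rankK big1 ?addr0 // => j /negbTE.
  by rewrite eq_sym => ->; rewrite rmorph0 mul0r.
have [k [a [u [Ht He]]]] := IH (fun e' he' => H e' (mem_behead (s := e :: s) he')).
have He0 : \sum_j f (\sum_i M e i * a i j) * u j = 0.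
  rewrite -[RHS](H e (mem_head _ _)).
  under [RHS]eq_bigr => i _ do rewrite Ht big_distrr.
  rewrite exchange_big /=; apply: eq_bigr => j _.
  rewrite rmorph_sum big_distrl /=; apply: eq_bigr => i _.
  by rewrite rmorphM mulrA.
have [k' [a' [u' [Hu Ha']]]] := fl k _ u He0.
exists k', (fun i l => \sum_j a i j * a' j l), u'; split.
  move=> i; rewrite Ht.
  under eq_bigr => j _ do rewrite Hu big_distrr.
  rewrite exchange_big /=; apply: eq_bigr => l _.
  rewrite rmorph_sum big_distrl /=; apply: eq_bigr => j _.
  by rewrite rmorphM mulrA.
move=> e0 he0 l.
under eq_bigr => i _ do rewrite big_distrr.
rewrite exchange_big /=.
rewrite (eq_bigr (fun j => (\sum_i M e0 i * a i j) * a' j l)); last first.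
  by move=> j _; rewrite big_distrl; apply: eq_bigr => i _; rewrite mulrA.
move: he0; rewrite inE => /orP[/eqP ->|he0]; first exact: Ha'.
by rewrite big1 // => j _; rewrite He // mul0r.
Qed.

Lemma reindex_koszul (A : comNzRingType) n (K : {set 'I_n}) (h : 'I_n -> {set 'I_n} -> A) g :
  \sum_I (\sum_(i | i \notin K) (I == i |: K)%:R * h i I) * g I =
  \sum_(i | i \notin K) h i (i |: K) * g (i |: K).
Proof.
under eq_bigr => I _ do rewrite big_distrl /=.
rewrite exchange_big /=; apply: eq_bigr => i _.
rewrite (bigD1 (i |: K)) //= eqxx mul1r big1 ?addr0 // => J /negbTE ->.
by rewrite mul0r mul0r.
Qed.

Lemma koszul_flat (A : comNzRingType) (Phi : {rmorphism A -> A}) n (y : 'I_n -> A) :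
  koszul_regular y -> flat_hom Phi -> koszul_regular (fun i => Phi (y i)).
Proof.
move=> kr fl l l0 c sc dc.
pose M := fun (e : {set 'I_n} + {set 'I_n}) (I : {set 'I_n}) =>
  match e with
  | inl K => \sum_(i | i \notin K) (I == i |: K)%:R * (ksign A i I * y i)
  | inr I0 => if #|I0| != l then (I == I0)%:R else 0
  end.
have [k [a [u [Hc Ha]]]] : exists k (a : {set 'I_n} -> 'I_k -> A) (u : 'I_k -> A),
    (forall i, c i = \sum_j Phi (a i j) * u j) /\
    (forall e, e \in enum {: {set 'I_n} + {set 'I_n}} -> forall j, \sum_i M e i * a i j = 0).
  apply: flat_sys => // -[K|I0] _ /=.
    have dcK := congr1 (fun f : {ffun {set 'I_n} -> A} => f K) dc.
    rewrite /= ffunE ffunE in dcK; rewrite -[RHS]dcK.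
    under eq_bigr => I _ do rewrite rmorph_sum /= big_distrl /=.
    rewrite exchange_big /=; apply: eq_bigr => i _.
    rewrite (bigD1 (i |: K)) //= eqxx rmorph1 mul1r big1 ?addr0.
      by rewrite rmorphM /ksign rmorphXn rmorphN1.
    by move=> J; move/negbTE => ->; rewrite mul0r rmorph0 mul0r.
  case hI: (#|I0| != l) => /=; last by rewrite big1 // => J _; rewrite rmorph0 mul0r.
  rewrite (bigD1 I0) //= eqxx rmorph1 mul1r sc // big1 ?addr0 // => J /negbTE ->.
  by rewrite rmorph0 mul0r.
have Hcol : forall j, exists b, supported l.+1 b /\ koszul_d y b = [ffun I => a I j].
  move=> j; apply: kr => //.
    move=> I0 hI0; rewrite ffunE.
    have := Ha (inr I0) (mem_enum _ _) j; rewrite /M hI0.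
    rewrite (bigD1 I0) //= eqxx mul1r big1 ?addr0 // => J /negbTE ->.
    by rewrite mul0r.
  apply/ffunP => K; rewrite !ffunE.
  have := Ha (inl K) (mem_enum _ _) j; rewrite /M.
  rewrite (reindex_koszul K (fun i I => ksign A i I * y i) (fun I => a I j)) => H0; rewrite -[RHS]H0.
  by apply: eq_bigr => i _; rewrite ffunE.
pose bf := fun j => proj1_sig (constructive_indefinite_description _ (Hcol j)).
have bfP : forall j, supported l.+1 (bf j) /\ koszul_d y (bf j) = [ffun I => a I j].
  move=> j; exact: (proj2_sig (constructive_indefinite_description _ (Hcol j))).
exists [ffun I => \sum_j Phi (bf j I) * u j]; split.
  move=> I hI; rewrite ffunE big1 // => j _.
  by rewrite (proj1 (bfP j)) // rmorph0 mul0r.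
apply/ffunP => K; rewrite ffunE Hc.
under eq_bigr => i _ do rewrite ffunE big_distrr /=.
rewrite exchange_big /=; apply: eq_bigr => j _.
have := congr1 (fun f : {ffun {set 'I_n} -> A} => f K) (proj2 (bfP j)); rewrite /= !ffunE => <-.
rewrite rmorph_sum big_distrl /=; apply: eq_bigr => i _.
rewrite !rmorphM /ksign rmorphXn rmorphN1; ring.
Qed.

Lemma koszul_iter (A : comNzRingType) (Phi : {rmorphism A -> A}) n (y : 'I_n -> A) :
  koszul_regular y -> flat_hom Phi -> forall k, koszul_regular (wk Phi y k).
Proof.
move=> kr fl; elim=> [|k IH] //.
have := koszul_flat IH fl.
by rewrite /wk /=.
Qed.

Lemma koszul_d0 (A : comNzRingType) n (w : 'I_n -> A) : koszul_d w 0 = 0.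
Proof. by apply/ffunP => K; rewrite !ffunE big1 // => i _; rewrite ffunE mulr0. Qed.

Lemma cv_poly (A : comNzRingType) n (bk : nat -> {ffun {set 'I_n} -> A}) N k :
  cv [ffun I => \poly_(k < N) bk k I] k = if (k < N)%N then bk k else 0.
Proof. by apply/ffunP => I; rewrite !ffunE coef_poly; case: ifP; rewrite ?ffunE. Qed.

Lemma cv_supp (A : comNzRingType) n l (a : {ffun {set 'I_n} -> {poly A}}) k :
  supported l a -> supported l (cv a k).
Proof. by move=> sa I hI; rewrite ffunE sa // coef0. Qed.

Lemma cv_big (A : comNzRingType) n (a : {ffun {set 'I_n} -> {poly A}}) :
  exists N, forall k, (N <= k)%N -> cv a k = 0.
Proof.
exists (\max_I size (a I)) => k Nk; apply/ffunP => I; rewrite !ffunE nth_default //.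
by apply: leq_trans Nk; exact: (leq_bigmax_cond I).
Qed.

Lemma cv_inj (A : comNzRingType) n (a b : {ffun {set 'I_n} -> {poly A}}) :
  (forall k, cv a k = cv b k) -> a = b.
Proof.
move=> H; apply/ffunP => I; apply/polyP => k.
by have := congr1 (fun f : {ffun {set 'I_n} -> A} => f I) (H k); rewrite !ffunE.
Qed.

Lemma choice_nat (T : Type) (P : nat -> T -> Prop) :
  (forall k, exists x, P k x) -> exists f, forall k, P k (f k).
Proof.
move=> H; exists (fun k => proj1_sig (constructive_indefinite_description _ (H k))).
by move=> k; exact: (proj2_sig (constructive_indefinite_description _ (H k))).
Qed.

Lemma exact_poly (A : comNzRingType) n (w : nat -> 'I_n -> A)
  (hw : forall k, koszul_regular (w k)) l (l0 : (0 < l)%N)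
  (a : {ffun {set 'I_n} -> {poly A}}) : supported l a ->
  (forall k, koszul_d (w k) (cv a k) = 0) ->
  exists b, supported l.+1 b /\ forall k, koszul_d (w k) (cv b k) = cv a k.
Proof.
move=> sa da.
have [bk Hb] : exists bk : nat -> {ffun {set 'I_n} -> A},
  forall k, supported l.+1 (bk k) /\ koszul_d (w k) (bk k) = cv a k.
  apply: (@choice_nat _ (fun k x => supported l.+1 x /\ koszul_d (w k) x = cv a k)) => k.
  apply: hw => //; exact: cv_supp.
have [N HN] := cv_big a.
exists [ffun I => \poly_(k < N) bk k I]; split.
  move=> I hI; rewrite ffunE; apply/polyP => k; rewrite coef_poly coef0.
  by case: ifP => //; rewrite (proj1 (Hb k)).
move=> k; rewrite cv_poly; case: ifP => [_|]; first exact: (proj2 (Hb k)).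
by move/negbT; rewrite -leqNgt => /HN ->; rewrite koszul_d0.
Qed.

Lemma chain_map (A : comNzRingType) (Phi : {rmorphism A -> A}) n (y t : 'I_n -> A)
  (hyt : forall i, Phi (y i) = t i * y i) (b db : {ffun {set 'I_n} -> {poly A}}) :
  (forall k, cv db k = koszul_d (wk Phi y k.+1) (cv b k)) ->
  forall k, koszul_d (wk Phi y k) (Gk Phi t b k) = - Gk Phi t db k.
Proof.
move=> Hdb k; apply/ffunP => K; rewrite !ffunE.
have E1 : forall i, i \notin K -> (-1) ^+ #|i |: K| = - (-1) ^+ #|K| :> A.
  by move=> i iK; rewrite cardsU1 iK exprS mulN1r.
have wkS : forall k i, wk Phi y k.+1 i = iter k Phi (t i) * wk Phi y k i.
  by move=> k' i; rewrite /wk iterSr hyt iterMr.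
have tU : forall i, i \notin K -> tprod t (i |: K) = t i * tprod t K.
  by move=> i iK; rewrite /tprod big_setU1.
case: k => [|k].
  have := congr1 (fun f : {ffun {set 'I_n} -> A} => f K) (Hdb 0%N); rewrite !ffunE => ->.
  rewrite sub0r mulrN opprK big_distrl big_distrr /=; apply: eq_bigr => i iK.
  rewrite !ffunE E1 // tU // /wk /= hyt; ring.
have := congr1 (fun f : {ffun {set 'I_n} -> A} => f K) (Hdb k); rewrite !ffunE => ->.
have := congr1 (fun f : {ffun {set 'I_n} -> A} => f K) (Hdb k.+1); rewrite !ffunE => ->.
rewrite mulr_suml -sumrB mulr_sumr -sumrN; apply: eq_bigr => i iK.
rewrite !ffunE E1 // (wkS k.+1) tU // iterMr; ring.
Qed.

Lemma koszul_dB (A : comNzRingType) n (w : 'I_n -> A) c1 c2 :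
  koszul_d w (c1 - c2) = koszul_d w c1 - koszul_d w c2.
Proof.
apply/ffunP => K; rewrite !ffunE -sumrB; apply: eq_bigr => i _.
by rewrite !ffunE mulrBr.
Qed.

Lemma koszul_dD (A : comNzRingType) n (w : 'I_n -> A) c1 c2 :
  koszul_d w (c1 + c2) = koszul_d w c1 + koszul_d w c2.
Proof.
apply/ffunP => K; rewrite !ffunE -big_split; apply: eq_bigr => i _.
by rewrite !ffunE mulrDr.
Qed.

Lemma cv0 (A : comNzRingType) n k : cv (0 : {ffun {set 'I_n} -> {poly A}}) k = 0.
Proof. by apply/ffunP => I; rewrite !ffunE coef0. Qed.

Lemma GkE (A : comNzRingType) (Phi : {rmorphism A -> A}) n (t : 'I_n -> A) (b : {ffun {set 'I_n} -> {poly A}}) k :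
  cv [ffun K : {set 'I_n} => skmul Phi (b K) ((-1) ^+ #|K| *: ('X - (tprod t K)%:P))] k
  = Gk Phi t b k.
Proof.
apply/ffunP => K; rewrite !ffunE skmulXC.
case: k => [|k] /=; first by ring.
by rewrite -!iterS iter_sign iterMr iter_sign; ring.
Qed.

Lemma fk_dd (A : comNzRingType) (Phi : {rmorphism A -> A}) n (y t : 'I_n -> A)
  (hyt : forall i, Phi (y i) = t i * y i) z :
  fk_d Phi y t (fk_d Phi y t z) = fk0 A n.
Proof.
rewrite /fk0 [LHS]surjective_pairing; congr (_, _); apply: cv_inj => k; rewrite cv0.
  rewrite fk_d1 fk_d1 koszul_dD koszul_dd add0r.
  rewrite (chain_map hyt (db := (fk_d Phi y t z).2)) ?addNr // => k'.
  exact: fk_d2.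
by rewrite fk_d2 fk_d2 koszul_dd.
Qed.

Lemma ideal0 (A : comNzRingType) n (w : 'I_n -> A) : in_ideal w 0.
Proof. by exists (fun _ => 0); rewrite big1 // => i _; rewrite mul0r. Qed.

Lemma idealD (A : comNzRingType) n (w : 'I_n -> A) u v :
  in_ideal w u -> in_ideal w v -> in_ideal w (u + v).
Proof.
move=> [c ->] [d ->]; exists (fun i => c i + d i).
by rewrite -big_split; apply: eq_bigr => i _; rewrite mulrDl.
Qed.

Lemma idealM (A : comNzRingType) n (w : 'I_n -> A) a v :
  in_ideal w v -> in_ideal w (a * v).
Proof.
move=> [c ->]; exists (fun i => a * c i).
by rewrite mulr_sumr; apply: eq_bigr => i _; rewrite mulrA.
Qed.

Lemma idealB (A : comNzRingType) n (w : 'I_n -> A) u v :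
  in_ideal w u -> in_ideal w v -> in_ideal w (u - v).
Proof.
move=> hu hv; apply: idealD => //; rewrite -mulN1r; exact: idealM.
Qed.

Lemma idealG (A : comNzRingType) n (w : 'I_n -> A) i : in_ideal w (w i).
Proof.
exists (fun j => (j == i)%:R); rewrite (bigD1 i) //= eqxx mul1r big1 ?addr0 //.
by move=> j /negbTE ->; rewrite mul0r.
Qed.

Lemma ideal_sum (A : comNzRingType) n (w : 'I_n -> A) (I : finType) (P : pred I) F :
  (forall i, P i -> in_ideal w (F i)) -> in_ideal w (\sum_(i | P i) F i).
Proof.
move=> H; apply: (big_ind (in_ideal w)) => //; [exact: ideal0 | exact: idealD].
Qed.

Lemma ideal_wkS (A : comNzRingType) (Phi : {rmorphism A -> A}) n (y t : 'I_n -> A)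
  (hyt : forall i, Phi (y i) = t i * y i) k v :
  in_ideal (wk Phi y k.+1) v -> in_ideal (wk Phi y k) v.
Proof.
move=> [c ->]; apply: ideal_sum => i _; apply: idealM.
rewrite /wk iterSr hyt iterMr; apply: idealM; exact: idealG.
Qed.

Lemma ideal_wk (A : comNzRingType) (Phi : {rmorphism A -> A}) n (y t : 'I_n -> A)
  (hyt : forall i, Phi (y i) = t i * y i) k i : in_ideal y (wk Phi y k i).
Proof.
elim: k => [|k IH]; first exact: idealG.
rewrite /wk iterSr hyt iterMr; exact: idealM.
Qed.

Lemma koszul_ideal (A : comNzRingType) n (w : 'I_n -> A) c :
  in_ideal w (koszul_d w c set0).
Proof.
rewrite ffunE; apply: ideal_sum => i _; rewrite mulrC mulrA; apply: idealM; exact: idealG.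
Qed.

Definition sing (A : comNzRingType) n (c : 'I_n -> A) : {ffun {set 'I_n} -> A} :=
  [ffun K => \sum_i (K == [set i])%:R * c i].

Lemma sing_supp (A : comNzRingType) n (c : 'I_n -> A) : supported 1 (sing c).
Proof.
move=> K hK; rewrite ffunE big1 // => i _.
case: eqP => [eK|]; last by rewrite mul0r.
by rewrite eK cards1 eqxx in hK.
Qed.

Lemma sing1 (A : comNzRingType) n (c : 'I_n -> A) i : sing c [set i] = c i.
Proof.
rewrite ffunE (bigD1 i) //= eqxx mul1r big1 ?addr0 // => j ji.
by rewrite (inj_eq set1_inj) eq_sym (negbTE ji) mul0r.
Qed.

Lemma koszul_sing (A : comNzRingType) n (w c : 'I_n -> A) K :
  koszul_d w (sing c) K = if K == set0 then \sum_i w i * c i else 0.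
Proof.
rewrite ffunE; case: eqP => [->|/eqP K0].
  apply: eq_big => [i|i _]; first by rewrite inE.
  rewrite ksign_U1 ?inE // setU0 sing1.
  have -> : [set m in (set0 : {set 'I_n}) | (m < i)%N] = set0 by apply/setP => m; rewrite !inE.
  by rewrite cards0 expr0 mul1r.
rewrite big1 // => i iK; rewrite sing_supp ?mulr0 //.
rewrite cardsU1 iK; move: K0; rewrite -card_gt0; by case: #|K|.
Qed.

Lemma stepA1 (A : comNzRingType) (Phi : {rmorphism A -> A}) n (y t : 'I_n -> A)
  (hyt : forall i, Phi (y i) = t i * y i) (x1 x2 : {ffun {set 'I_n} -> {poly A}}) :
  (forall J, J != set0 -> x2 J = 0) ->
  (forall k, koszul_d (wk Phi y k) (cv x1 k) + Gk Phi t x2 k = 0) ->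
  exists b', supported 1 b' /\ forall k, koszul_d (wk Phi y k.+1) (cv b' k) = cv x2 k.
Proof.
move=> s2 hx.
pose beta k := (x2 set0)`_k.
have hk : forall k, in_ideal (wk Phi y k.+1) (beta k - beta k.+1).
  move=> k; have := congr1 (fun f : {ffun {set 'I_n} -> A} => f set0) (hx k.+1).
  move: (koszul_ideal (wk Phi y k.+1) (cv x1 k.+1)).
  move: (koszul_d (wk Phi y k.+1) (cv x1 k.+1)) => KD hKD.
  rewrite !ffunE cards0 expr0 mul1r /tprod big_set0 iter1r mulr1 => H.
  have -> : beta k - beta k.+1 = - KD set0.
    by apply/eqP; rewrite -addr_eq0 addrC H.
  rewrite -mulN1r; exact: idealM.
set N := size (x2 set0).
have hb : forall m k, (N <= k + m)%N -> in_ideal (wk Phi y k.+1) (beta k).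
  elim=> [|m IH] k hN.
    rewrite addn0 in hN; rewrite /beta nth_default //; exact: ideal0.
  case: (leqP N k) => hNk; first by rewrite /beta nth_default //; apply: ideal0.
  have -> : beta k = (beta k - beta k.+1) + beta k.+1 by rewrite subrK.
  apply: idealD => //; apply: (ideal_wkS hyt); apply: IH; by rewrite addSnnS.
have [ck Hck] : exists ck : nat -> 'I_n -> A, forall k,
    beta k = \sum_i ck k i * wk Phi y k.+1 i.
  apply: (@choice_nat _ (fun k c => beta k = \sum_i c i * wk Phi y k.+1 i)) => k.
  exact: (hb N k (leq_addl _ _)).
exists [ffun K => \poly_(k < N) sing (ck k) K]; split.
  move=> K hK; rewrite ffunE; apply/polyP => k; rewrite coef_poly coef0 sing_supp //.
  by rewrite if_same.
move=> k; rewrite cv_poly; apply/ffunP => K; rewrite [RHS]ffunE.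
case: ifP => hkN.
  rewrite koszul_sing; case: eqP => [->|/eqP K0]; last by rewrite s2 // coef0.
  by rewrite -/(beta k) Hck; apply: eq_bigr => i _; rewrite mulrC.
rewrite koszul_d0 ffunE; case: (eqVneq K set0) => [->|K0]; last by rewrite s2 // coef0.
by rewrite nth_default // leqNgt hkN.
Qed.

Lemma addfE (T : finType) (V : zmodType) (f g : {ffun T -> V}) x : (f + g) x = f x + g x.
Proof. by rewrite ffunE. Qed.

Lemma augE (A : comNzRingType) (Phi : {rmorphism A -> A}) (p : {poly A}) N :
  (size p <= N)%N -> aug Phi p = \sum_(k < N) p`_k.
Proof.
move=> hN; rewrite /aug (@sum_ext _ (fun k => p`_k) (size p)) //; last first.
  by move=> i /andP[hi _]; rewrite nth_default.
by apply: eq_bigr => i _; rewrite iter1r mulr1.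
Qed.

Lemma telescope (A : comNzRingType) (g : nat -> A) m :
  \sum_(k < m.+1) ((if nat_of_ord k is k'.+1 then g k' else 0) - g k) = - g m.
Proof.
elim: m => [|m IH]; first by rewrite big_ord_recr big_ord0 /= add0r sub0r.
by rewrite big_ord_recr IH /=; ring.
Qed.

Lemma ideal_mono (A : comNzRingType) (Phi : {rmorphism A -> A}) n (y t : 'I_n -> A)
  (hyt : forall i, Phi (y i) = t i * y i) k v :
  in_ideal (wk Phi y k) v -> in_ideal y v.
Proof.
move=> [c ->]; apply: ideal_sum => i _; apply: idealM; exact: (@ideal_wk _ Phi _ y t hyt).
Qed.

Lemma setU1_neq0 n (i : 'I_n) (K : {set 'I_n}) : (i |: K == set0) = false.
Proof. by apply/negbTE/set0Pn; exists i; rewrite setU11. Qed.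

Lemma Gk_set0 (A : comNzRingType) (Phi : {rmorphism A -> A}) n (t : 'I_n -> A) (b : {ffun {set 'I_n} -> {poly A}}) k :
  Gk Phi t b k set0 = (if k is k'.+1 then (b set0)`_k' else 0) - (b set0)`_k.
Proof. by rewrite ffunE cards0 expr0 mul1r /tprod big_set0 iter1r mulr1. Qed.

Lemma part0_back (A : comNzRingType) (Phi : {rmorphism A -> A}) n (y t : 'I_n -> A)
  (hyt : forall i, Phi (y i) = t i * y i) z :
  in_ideal y (aug Phi ((fk_d Phi y t z).1 set0)).
Proof.
set p := (fk_d Phi y t z).1 set0.
set m := (size p + size (z.2 set0))%N.
rewrite (@augE _ _ _ m.+1); last by rewrite /m; lia.
have E : forall k, p`_k = koszul_d (wk Phi y k) (cv z.1 k) set0 + Gk Phi t z.2 k set0.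
  move=> k; have -> : p`_k = cv (fk_d Phi y t z).1 k set0 by rewrite ffunE.
  by rewrite fk_d1 addfE.
under eq_bigr => k _ do rewrite E Gk_set0.
rewrite big_split /= telescope nth_default ?oppr0 ?addr0; last by rewrite /m leq_addl.
apply: ideal_sum => k _; apply: (ideal_mono hyt); exact: koszul_ideal.
Qed.

Lemma part0_fwd (A : comNzRingType) (Phi : {rmorphism A -> A}) n (y t : 'I_n -> A)
  (x : fkT A n) : inFK 0 x -> in_ideal y (aug Phi (x.1 set0)) ->
  exists z, inFK 1 z /\ fk_d Phi y t z = x.
Proof.
move=> [s1 s2] [c hc].
set p := x.1 set0 in hc; set N := size p.
pose Q k := \sum_(j < N | (k < j)%N) p`_j.
have RQ : forall k, \sum_(j < N | (k <= j)%N) p`_j = Q k + p`_k.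
  move=> k; rewrite /Q; case: (ltnP k N) => hk.
    rewrite (bigD1 (Ordinal hk)) //= addrC; congr (_ + _).
    apply: eq_bigl => j; rewrite ltn_neqAle andbC; congr (_ && _).
    by rewrite -val_eqE /= eq_sym.
  rewrite nth_default // addr0 big1; last by move=> j hj; have := ltn_ord j; lia.
  by rewrite big1 // => j hj; have := ltn_ord j; lia.
pose q := \poly_(k < N) Q k.
have qE : forall k, q`_k = Q k.
  move=> k; rewrite coef_poly; case: ltnP => // hk.
  by rewrite /Q big1 // => j hj; have := ltn_ord j; lia.
have cz1 : forall k, cv [ffun K => (sing c K)%:P] k = if k == 0%N then sing c else 0.
  move=> k; apply/ffunP => K; rewrite !ffunE coefC; by case: (k == 0%N); rewrite ?ffunE.
exists ([ffun K => (sing c K)%:P], [ffun K => if K == set0 then q else 0]); split.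
  split => [K hK|J hJ]; rewrite ffunE; first by rewrite sing_supp.
  by rewrite ifN // -cards_eq0.
apply: injective_projections; apply: cv_inj => k.
  rewrite fk_d1; apply/ffunP => K; rewrite addfE cz1.
  case: (eqVneq K set0) => [->|K0].
    rewrite Gk_set0 /=; case: k => [|k] /=.
      rewrite koszul_sing eqxx ffunE eqxx !qE [RHS]ffunE -/p.
      have -> : \sum_i wk Phi y 0 i * c i = Q 0%N + p`_0.
        rewrite -RQ; transitivity (aug Phi p).
          by rewrite hc; apply: eq_bigr => i _; rewrite mulrC.
        by rewrite (augE _ (leqnn N)); apply: eq_bigl.
      by rewrite sub0r addrC addKr.
    rewrite koszul_d0 !ffunE eqxx !qE -/p add0r.
    have -> : Q k = \sum_(j < N | (k.+1 <= j)%N) p`_j by [].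
    by rewrite RQ addrC addKr.
  rewrite [RHS]ffunE s1 ?cards_eq0 // coef0.
  have -> : koszul_d (wk Phi y k) (if k == 0%N then sing c else 0) K = 0.
    case: (k == 0%N); first by rewrite koszul_sing (negbTE K0).
    by rewrite koszul_d0 ffunE.
  by rewrite add0r /= ffunE ffunE (negbTE K0) !coef0 mul0r; case: k => [|k]; rewrite ?coef0 subr0 mulr0.
rewrite (@fk_d2 _ Phi _ y t ([ffun K => (sing c K)%:P], [ffun K => if K == set0 then q else 0]) k); apply/ffunP => K; rewrite [RHS]ffunE s2 // coef0 ffunE big1 // => i _.
by rewrite !ffunE setU1_neq0 coef0 mulr0.
Qed.

Lemma skmul0p (A : comNzRingType) (Phi : {rmorphism A -> A}) q : skmul Phi 0 q = 0.
Proof. by rewrite /skmul size_poly0 big_ord0. Qed.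

Unset Implicit Arguments.
Theorem theorem3
  (A K : comNzRingType) (iota : {rmorphism K -> A}) (n : nat) (y : 'I_n -> A)
  (s : 'I_n -> mpoly K n)
  (phi : {rmorphism mpoly K n -> mpoly K n})
  (psi : {rmorphism mpoly K n -> A})
  (Phi : {rmorphism A -> A}) :
  noetherian A ->
  injective iota ->
  (forall i, s i != 0) ->
  (forall k : K, phi (@mconst K n k) = @mconst K n k) ->
  (forall i, phi (@mvar K n i) = s i * @mvar K n i) ->
  flat_hom phi ->
  (forall k : K, psi (@mconst K n k) = iota k) ->
  (forall i, psi (@mvar K n i) = y i) ->
  (forall k : K, Phi (iota k) = iota k) ->
  (forall p, Phi (psi p) = psi (phi p)) ->
  flat_hom Phi ->
  koszul_regular y ->
  let t := fun i => psi (s i) in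
  (* exactness at FK_l for l >= 1 (FK_{n+2} = 0) *)
  (forall l, (0 < l)%N -> forall x : fkT A n, inFK l x ->
     (fk_d Phi y t x = fk0 A n <->
      exists z, inFK l.+1 z /\ fk_d Phi y t z = x)) /\
  (* exactness at FK_0: kernel of the augmentation = image of d_1 *)
  (forall x : fkT A n, inFK 0 x ->
     (in_ideal y (aug Phi (x.1 set0)) <->
      exists z, inFK 1 z /\ fk_d Phi y t z = x)) /\
  (* the augmentation FK_0 -> A/I_n is surjective *)
  (forall a : A, exists x : fkT A n, inFK 0 x /\ in_ideal y (aug Phi (x.1 set0) - a)).
Proof.
move=> noeth inj sne phic phiv flphi psic psiv Phic comm flPhi kr t.
have hyt : forall i, Phi (y i) = t i * y i.
  by move=> i; rewrite -psiv comm phiv rmorphM psiv.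
have kw := koszul_iter kr flPhi.
split; [|split].
- move=> l l0 x [s1 s2]; split.
    move=> Hd.
    have h2 : forall k, koszul_d (wk Phi y k.+1) (cv x.2 k) = 0.
      by move=> k; rewrite -(fk_d2 Phi y t) Hd /fk0 /= cv0.
    have h1 : forall k, koszul_d (wk Phi y k) (cv x.1 k) + Gk Phi t x.2 k = 0.
      by move=> k; rewrite -(fk_d1 Phi y t) Hd /fk0 /= cv0.
    have [b' [sb' db']] : exists b', supported l b' /\
        forall k, koszul_d (wk Phi y k.+1) (cv b' k) = cv x.2 k.
      case: l l0 s1 s2 => [|[|l]] // _ s1 s2.
        apply: (stepA1 hyt (x1 := x.1)) => // J J0; apply: s2.
        by rewrite eqSS cards_eq0.
      apply: (exact_poly (w := fun k => wk Phi y k.+1)) => //.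
    pose a0 := [ffun Q => x.1 Q - skmul Phi (b' Q) ((-1) ^+ #|Q| *: ('X - (tprod t Q)%:P))].
    have ca0 : forall k, cv a0 k = cv x.1 k - Gk Phi t b' k.
      by move=> k; rewrite -GkE; apply/ffunP => Q; rewrite !ffunE coefB.
    have sa0 : supported l a0.
      by move=> Q hK; rewrite ffunE s1 // sb' // skmul0p subrr.
    have da0 : forall k, koszul_d (wk Phi y k) (cv a0 k) = 0.
      move=> k; rewrite ca0 koszul_dB (chain_map hyt (db := x.2)) ?opprK ?h1 //.
    have [a'' [sa'' da'']] := exact_poly kw l0 sa0 da0.
    exists (a'', b'); split.
      by split => // J hJ; apply: sb'; rewrite -eqSS.
    apply: injective_projections; apply: cv_inj => k.
      by rewrite (@fk_d1 _ Phi _ y t (a'', b') k) /= da'' ca0 subrK.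
    by rewrite (@fk_d2 _ Phi _ y t (a'', b') k) /= db'.
  by move=> [z [_ <-]]; exact: fk_dd hyt z.
- move=> x hx; split; first exact: part0_fwd.
  by move=> [z [_ <-]]; exact: part0_back hyt z.
- move=> a; exists ([ffun Q => if Q == set0 then a%:P else 0], 0); split.
    split => [Q hK|J hJ]; rewrite ffunE //.
    by rewrite ifN // -cards_eq0.
  rewrite /= ffunE eqxx (augE _ (size_polyC_leq1 a)) big_ord1 coefC /= subrr.
  exact: ideal0.
Qed.
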